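(* Let $\alpha>0$ and $G:=\delta_{\bar B(0,\alpha)}$ on $\mathbb{R}^n$, the indicator function of the closed Euclidean ball of radius $\alpha$ centred at $0$. Let $(x^*,q^* )\in\operatorname{graph}\partial G$. Define $\gamma:=\|q^*\|/(2\alpha)$ if $q^*\neq0$; if $q^*=0$, let $\gamma\ge0$ be arbitrary. Then for all $x\in\bar B(0,\alpha)$ and all $q\in\partial G(x)$, \[ \inf_{\bar x\in(\partial G)^{-1}(q^* )}\langle q-q^*,x-\bar x\rangle\ge\gamma\operatorname{dist}^2(x,(\partial G)^{-1}(q^* )), \] i.e. $\partial G$ is $(I,\gamma I)$-strongly submonotone at $(x^*,q^* )$ with neighbourhood $\operatorname{dom}G=\bar B(0,\alpha)$.
   Context: $\partial G$ is the convex subdifferential (normal cone of the ball); $(\partial G)^{-1}(q^* )=\{x:q^*\in\partial G(x)\}$; $\operatorname{dist}(x,A)=\inf_{a\in A}\|x-a\|$. *)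

(* Defs.v *)
From HB Require Import structures.
From mathcomp Require Import all_boot all_order all_algebra.
From mathcomp Require Import all_classical all_reals.
From mathcomp Require Import ereal.
Set Implicit Arguments. Unset Strict Implicit. Unset Printing Implicit Defensive.
Import Order.TTheory GRing.Theory Num.Theory.
Local Open Scope ring_scope.
Local Open Scope classical_set_scope.

Definition dotv (R : realType) (n : nat) (u v : 'rV[R]_n) : R :=
  \sum_(i < n) u 0 i * v 0 i.

Definition enorm (R : realType) (n : nat) (u : 'rV[R]_n) : R :=
  Num.sqrt (dotv u u).

Definition edist (R : realType) (n : nat) (x : 'rV[R]_n) (A : set 'rV[R]_n) : R :=
  inf [set enorm (x - a) | a in A].

Definition ball_indicator (R : realType) (n : nat) (alpha : R) (x : 'rV[R]_n) : \bar R :=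
  if enorm x <= alpha then 0%E else +oo%E.

Definition subdiff (R : realType) (n : nat) (f : 'rV[R]_n -> \bar R)
  (x q : 'rV[R]_n) : Prop :=
  f x \is a fin_num /\ forall y, (f x + (dotv q (y - x))%:E <= f y)%E.

(* Main.v *)
Require Import Defs.
From HB Require Import structures.
From mathcomp Require Import all_boot all_order all_algebra.
From mathcomp Require Import all_classical all_reals.
From mathcomp Require Import ereal.
From mathcomp Require Import ring lra.
Set Implicit Arguments. Unset Strict Implicit.
Import Order.TTheory GRing.Theory Num.Theory.
Local Open Scope ring_scope.
Local Open Scope classical_set_scope.

Section H.
Variables (R : realType) (n : nat).
Implicit Types u v w : 'rV[R]_n.

Lemma dotvC u v : dotv u v = dotv v u.
Proof. by apply: eq_bigr => i _; rewrite mulrC. Qed.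
Lemma dotvDl u w v : dotv (u + w) v = dotv u v + dotv w v.
Proof. by rewrite /dotv -big_split; apply: eq_bigr => i _; rewrite !mxE mulrDl. Qed.
Lemma dotvNl u v : dotv (- u) v = - dotv u v.
Proof. by rewrite /dotv -sumrN; apply: eq_bigr => i _; rewrite !mxE mulNr. Qed.
Lemma dotvZl (a : R) u v : dotv (a *: u) v = a * dotv u v.
Proof. by rewrite /dotv mulr_sumr; apply: eq_bigr => i _; rewrite !mxE mulrA. Qed.
Lemma dotvBl u w v : dotv (u - w) v = dotv u v - dotv w v.
Proof. by rewrite dotvDl dotvNl. Qed.
Lemma dotvDr u w v : dotv v (u + w) = dotv v u + dotv v w.
Proof. by rewrite dotvC dotvDl !(dotvC v). Qed.
Lemma dotvBr u w v : dotv v (u - w) = dotv v u - dotv v w.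
Proof. by rewrite dotvC dotvBl !(dotvC v). Qed.
Lemma dotvZr (a : R) u v : dotv v (a *: u) = a * dotv v u.
Proof. by rewrite dotvC dotvZl (dotvC v). Qed.
Lemma dotv0l v : dotv 0 v = 0.
Proof. by rewrite /dotv big1 // => i _; rewrite mxE mul0r. Qed.
Lemma dotv_ge0 u : 0 <= dotv u u.
Proof. by apply: sumr_ge0 => i _; rewrite -expr2 sqr_ge0. Qed.
Lemma dotv_eq0 u : dotv u u <= 0 -> u = 0.
Proof.
move=> h; have h0 : dotv u u == 0 by rewrite eq_le h dotv_ge0.
move: h0; rewrite /dotv psumr_eq0; last by move=> i _; rewrite -expr2 sqr_ge0.
move/allP => H; apply/rowP => i; rewrite mxE.
by have := H i (mem_index_enum _); rewrite /= mulf_eq0 orbb => /eqP.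
Qed.
Lemma enorm_sq u : enorm u ^+ 2 = dotv u u.
Proof. by rewrite sqr_sqrtr // dotv_ge0. Qed.
Lemma enorm_ge0 u : 0 <= enorm u.
Proof. exact: sqrtr_ge0. Qed.
Lemma enorm_le u a : enorm u <= a -> dotv u u <= a ^+ 2.
Proof. move=> h; rewrite -enorm_sq; have := enorm_ge0 u; nra. Qed.

Lemma sub_ball (a : R) (x q : 'rV[R]_n) : subdiff (ball_indicator a) x q ->
  enorm x <= a /\ forall y, enorm y <= a -> dotv q (y - x) <= 0.
Proof.
case=> fx H; have hx : enorm x <= a.
  by move: fx; rewrite /ball_indicator; case: ifP.
split=> // y hy; have := H y.
by rewrite /ball_indicator hx hy add0e lee_fin.
Qed.
End H.

Theorem lemma5p10 (R : realType) (n : nat) (alpha : R) (xs qs : 'rV[R]_n)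
  (gamma : R) :
  0 < alpha ->
  subdiff (ball_indicator alpha) xs qs ->
  (qs != 0 -> gamma = enorm qs / (2 * alpha)) ->
  (qs = 0 -> 0 <= gamma) ->
  forall (x q : 'rV[R]_n), enorm x <= alpha ->
    subdiff (ball_indicator alpha) x q ->
    (ereal_inf [set (dotv (q - qs) (x - xb))%:E
                | xb in [set xb | subdiff (ball_indicator alpha) xb qs]]
     >= (gamma * (edist x [set xb | subdiff (ball_indicator alpha) xb qs]) ^+ 2)%:E)%E.
Proof.
move=> apos Hs hg1 hg0 x q hx Hq.
set S := [set xb | subdiff (ball_indicator alpha) xb qs].
apply: le_ereal_inf_tmp => _ [xb Sxb <-]; rewrite lee_fin.
have d0 : 0 <= edist x S.
  apply: lb_le_inf; first by exists (enorm (x - xb)), xb.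
  by move=> _ [a _ <-]; exact: enorm_ge0.
have dle : edist x S <= enorm (x - xb).
  apply: ge_inf; last by exists xb.
  by exists 0 => _ [a _ <-]; exact: enorm_ge0.
have [hq hqy] := sub_ball Hq.
have [hxb hxby] := sub_ball Sxb.
have q1 : 0 <= dotv q (x - xb).
  have := hqy xb hxb; rewrite !dotvBr; lra.
rewrite dotvBl.
case: (eqVneq qs 0) => [qs0|qsn].
  have xS : S x.
    split; first by rewrite /ball_indicator hx.
    move=> y; rewrite qs0 dotv0l /ball_indicator hx add0e.
    by case: ifP => _; rewrite ?lexx ?leey.
  have dle0 : edist x S <= 0.
    have -> : (0:R) = enorm (x - x) by rewrite subrr /enorm dotv0l sqrtr0.
    by apply: ge_inf; [exists 0 => _ [a _ <-]; exact: enorm_ge0 | exists x].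
  have -> : edist x S = 0 by apply/eqP; rewrite eq_le dle0 d0.
  by rewrite qs0 dotv0l expr0n /= mulr0 subr0.
have hg := hg1 qsn.
set N := enorm qs.
have N0 : 0 <= N := enorm_ge0 qs.
have Npos : 0 < N.
  rewrite lt_neqAle N0 andbT; apply/eqP => hN.
  move/eqP: qsn; apply; apply: dotv_eq0; rewrite -enorm_sq -/N -hN.
  by rewrite expr0n.
have hQ : dotv qs qs = N ^+ 2 by rewrite enorm_sq.
set c := alpha / N.
have hc : c * N = alpha by rewrite /c divfK // gt_eqF.
have c0 : 0 < c by rewrite /c divr_gt0.
set u := c *: qs.
have huu : dotv u u = alpha ^+ 2.
  by rewrite /u dotvZl dotvZr hQ -hc; ring.
have hu : enorm u <= alpha.
  by rewrite /enorm huu sqrtr_sqr ger0_norm // ltW.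
have hxbu : xb = u.
  apply/eqP; rewrite -subr_eq0; apply/eqP/dotv_eq0.
  have h1 := hxby u hu.
  have h2 := enorm_le hxb.
  move: h1; rewrite !dotvBl !dotvBr /u !dotvZl !dotvZr (dotvC xb qs) hQ => h1.
  have h3 : c * (c * N ^+ 2 - dotv qs xb) <= 0.
    by rewrite mulr_ge0_le0 // ?ltW // lerBlDr add0r -subr_le0.
  rewrite -hc in h2.
  nra.
subst xb.
have gpos : 0 <= gamma by rewrite hg divr_ge0 // mulr_ge0 // ltW.
have hgc : 2 * gamma * c = 1.
  rewrite hg -/N /c; clearbody N; have Nn : N != 0 by rewrite gt_eqF.
  have an : alpha != 0 by rewrite gt_eqF.
  by field; rewrite an Nn.
have e2 : edist x S ^+ 2 <= dotv (x - u) (x - u).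
  by rewrite -enorm_sq; have := enorm_ge0 (x - u); nra.
have hx2 := enorm_le hx.
move: e2 q1; rewrite /u !dotvBl !dotvBr !dotvZl !dotvZr (dotvC qs x) hQ => e2 q1.
rewrite -hc in hx2.
have h4 : gamma * (edist x S ^+ 2) <= gamma * (dotv x x - c * dotv x qs - (c * dotv x qs - c * (c * N ^+ 2))).
  by rewrite ler_wpM2l.
have h5 : gamma * dotv x x <= gamma * ((c * N)^+2) by rewrite ler_wpM2l.
nra.
Qed.
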